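(* Let $a\geq 3$ and $m\geq 2a^2-a+2$ be integers, and suppose $[C(m,a)]$ is colored with red and blue so that there is no monochromatic solution of $L(m,a)$ in $[C(m,a)]$, with $a-2$ red and $a-1$ blue. Then $m-2$ is red and $m-3$ is blue.
   Context: For integers $m\geq 3$, $a\geq 1$, $L(m,a)$ denotes the equation $x_1+x_2+\cdots+x_{m-1}=a x_m$. For a positive integer $n$, $[n]=\{1,\dots,n\}$. A solution of $L(m,a)$ in $[n]$ is an $m$-tuple $(x_1,\dots,x_m)\in[n]^m$ (entries not necessarily distinct) satisfying the equation; given a 2-coloring of $[n]$, it is monochromatic if all $x_i$ have the same color. $C(m,a)$ denotes $\left\lceil \frac{m-1}{a}\left\lceil \frac{m-1}{a}\right\rceil\right\rceil$. *)

(* Defs.v *)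
From mathcomp Require Import all_boot.
Set Implicit Arguments. Unset Strict Implicit. Unset Printing Implicit Defensive.

Definition ceil_div (p q : nat) : nat := (p + q - 1) %/ q.

Definition Cma (m a : nat) : nat := ceil_div ((m - 1) * ceil_div (m - 1) a) a.

(* A solution of L(m,a): x_1+...+x_{m-1} = a x_m, written with 0-based indices
   x 0, ..., x (m-1), all entries in [n] = {1..n}. *)
Definition is_solution (m a n : nat) (x : nat -> nat) : Prop :=
  (forall i, i < m -> 1 <= x i <= n) /\
  \sum_(0 <= i < m.-1) x i = a * x m.-1.

(* A 2-colouring of [n] is a map col : nat -> bool (true = red, false = blue);
   values outside [n] are irrelevant. *)
Definition monochromatic (m : nat) (col : nat -> bool) (x : nat -> nat) : Prop :=
  forall i, i < m -> col (x i) = col (x 0).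

Definition no_mono_solution (m a n : nat) (col : nat -> bool) : Prop :=
  forall x, is_solution m a n x -> ~ monochromatic m col x.

(* Main.v *)
Require Import Defs.
From mathcomp Require Import all_boot.
From mathcomp Require Import zify.

Definition xs (m c t s : nat) (i : nat) : nat :=
  if i < c then t else if i == m.-1 then t else s.

Lemma sum_xs m c t s : c <= m.-1 ->
  \sum_(0 <= i < m.-1) xs m c t s i = c * t + (m.-1 - c) * s.
Proof.
move=> hc.
rewrite (@big_cat_nat _ _ _ c) /=; [|by []|exact: hc].
rewrite (eq_big_nat _ _ (F2 := fun _ => t)); last first.
  by move=> i /andP [_ hi]; rewrite /xs hi.
rewrite [X in _ + X](eq_big_nat _ _ (F2 := fun _ => s)); last first.
  move=> i /andP [h1 h2]; rewrite /xs ltnNge h1 /=.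
  by rewrite (ltn_eqF h2).
by rewrite !sum_nat_const_nat subn0.
Qed.

Lemma Cma_ge a m : 1 <= a -> a * a + 1 <= m -> m - 1 <= Cma m a.
Proof.
move=> ha hm.
rewrite /Cma /ceil_div.
have hc : a <= (m - 1 + a - 1) %/ a.
  rewrite leq_divRL //; lia.
rewrite leq_divRL //.
apply: (leq_trans (leq_mul (leqnn (m-1)) hc)).
lia.
Qed.

Lemma mono_xs m a n col c t s : is_solution m a n (xs m c t s) ->
  col t = col s -> 0 < c ->
  monochromatic m col (xs m c t s).
Proof.
move=> _ hts hc i hi; rewrite /xs hc.
case: (i < c) => //; case: (i == m.-1) => //.
Qed.

Theorem lemma2 (a m : nat) (col : nat -> bool) :
  3 <= a ->
  2 * a ^ 2 - a + 2 <= m ->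
  no_mono_solution m a (Cma m a) col ->
  col (a - 2) = true ->
  col (a - 1) = false ->
  col (m - 2) = true /\ col (m - 3) = false.
Proof.
move=> ha hm H h2 h1.
have ha2 : a * a + 1 <= m.
  have : a * a <= a ^ 2 by rewrite expnS expn1.
  have : a <= a ^ 2 by rewrite expnS expn1 leq_pmulr //; lia.
  lia.
have hC : m - 1 <= Cma m a by apply: Cma_ge => //; lia.
have hm17 : 10 <= m by nia.
have ham : a + 2 <= m by nia.
split.
- case E: (col (m - 2)) => //.
  have Hs : is_solution m a (Cma m a) (xs m 1 (m - 2) (a - 1)).
    split.
      move=> i hi; rewrite /xs; case: (i < 1); first lia.
      case: (i == m.-1); lia.
    rewrite sum_xs; last lia.
    rewrite /xs ltnNge (_ : 1 <= m.-1) /=; last lia.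
    rewrite eqxx; nia.
  exfalso; apply: (H _ Hs); apply: mono_xs Hs _ _ => //.
  by rewrite E h1.
- case E: (col (m - 3)) => //.
  have Hs : is_solution m a (Cma m a) (xs m 2 (m - 3) (a - 2)).
    split.
      move=> i hi; rewrite /xs; case: (i < 2); first lia.
      case: (i == m.-1); lia.
    rewrite sum_xs; last lia.
    rewrite /xs ltnNge (_ : 2 <= m.-1) /=; last lia.
    rewrite eqxx; nia.
  exfalso; apply: (H _ Hs); apply: mono_xs Hs _ _ => //.
  by rewrite E h2.
Qed.
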